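(* Let $f:\mathbb{R}^n\to\mathbb{R}$ satisfy: (A1) $f\in C^\infty(\mathbb{R}^n)$; (A2) there is $M>0$ with $f(x)>0$ for all $x\notin B(0,M)$; (A3) $\nabla f(p)\neq0$ for all $p\in\mathcal{B}:=\{p:f(p)=0\}$. For $p\in\mathcal{B}$, $r>0$ and $\beta\in(0,1)$ define the open slab \[\Gamma_r(p)=\{p+v:\ v\in\mathbb{R}^n,\ |v^T\nabla f(p)|<\beta r\|\nabla f(p)\|\}.\] Then for each thickness factor $\beta\in(0,1)$ there exists a distance $\sigma_2(\beta)>0$ such that for all $p\in\mathcal{B}$ and all $0<r<\sigma_2(\beta)$, \[\mathcal{B}\cap B(p,r)\subseteq\Gamma_r(p).\]
   Context: $\|\cdot\|$ is the Euclidean norm and $B(p,r)$ the open Euclidean ball of center $p$ and radius $r$. Under (A1)–(A3), $\mathcal{B}$ is a compact smooth hypersurface. *)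

(* Defs.v *)
From HB Require Import structures.
From mathcomp Require Import all_boot all_order all_algebra.
From mathcomp Require Import all_classical all_reals all_analysis.
Set Implicit Arguments. Unset Strict Implicit. Unset Printing Implicit Defensive.
Import Order.TTheory GRing.Theory Num.Theory.
Import numFieldNormedType.Exports.
Local Open Scope ring_scope.

Section Defs.
Variables (R : realType) (n : nat).
Local Notation V := 'rV[R]_n.

Definition ebasis (i : 'I_n) : V := delta_mx 0 i.

(* Euclidean inner product and Euclidean norm (the library norm on
   matrices is the max norm, so we define the Euclidean one explicitly). *)
Definition dotv (u v : V) : R := \sum_(i < n) u 0 i * v 0 i.
Definition enorm (v : V) : R := Num.sqrt (dotv v v).

Definition eball (p : V) (r : R) : set V := [set q | enorm (q - p) < r].

Definition partial (f : V -> R) (i : 'I_n) : V -> R :=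
  fun x => derive f x (ebasis i).

Definition iter_partial (s : seq 'I_n) (f : V -> R) : V -> R :=
  foldr (fun i g => partial g i) f s.

Definition smooth (f : V -> R) : Prop :=
  forall s : seq 'I_n,
    continuous (iter_partial s f) /\
    forall (i : 'I_n) (x : V), derivable (iter_partial s f) x (ebasis i).

Definition grad (f : V -> R) (p : V) : V := \row_(i < n) partial f i p.

Definition zeroset (f : V -> R) : set V := [set p | f p = 0].

Definition slab (f : V -> R) (beta r : R) (p : V) : set V :=
  [set q | exists v : V, q = p + v /\
     `| dotv v (grad f p) | < beta * r * enorm (grad f p)].

End Defs.

(* Main.v *)
Require Import Defs.
From HB Require Import structures.
From mathcomp Require Import all_boot all_order all_algebra.
From mathcomp Require Import all_classical all_reals all_analysis.
From mathcomp Require Import ring lra.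
Import Order.TTheory GRing.Theory Num.Theory.
Import numFieldNormedType.Exports.
Local Open Scope ring_scope.
Local Open Scope classical_set_scope.

Section H.
Variables (R : realType) (n : nat).
Local Notation V := 'rV[R]_n.

Lemma enorm_ge0 (v : V) : 0 <= enorm v.
Proof. exact: sqrtr_ge0. Qed.

Lemma coord_le_enorm (v : V) i : `|v 0 i| <= enorm v.
Proof.
rewrite /enorm /dotv -sqrtr_sqr.
have : v 0 i ^+ 2 <= \sum_(j < n) v 0 j * v 0 j.
  rewrite (bigD1 i) //= expr2 lerDl.
  by apply: sumr_ge0 => j _; rewrite -expr2 sqr_ge0.
exact: ler_wsqrtr.
Qed.

Definition pre (k : nat) (v : V) : V := \row_j (if (j < k)%N then v 0 j else 0).

Lemma pre0 v : pre 0 v = 0.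
Proof. by apply/rowP => j; rewrite !mxE. Qed.

Lemma pren v : pre n v = v.
Proof. by apply/rowP => j; rewrite !mxE ltn_ord. Qed.

Lemma preS v (i : 'I_n) : pre i.+1 v = pre i v + v 0 i *: @ebasis R n i.
Proof.
apply/rowP => j; rewrite !mxE /= ltnS leq_eqVlt.
case: (eqVneq j i) => [->|ji] /=; first by rewrite ltnn eqxx mulr1 add0r.
by move: ji; rewrite -(inj_eq val_inj) => /negbTE -> /=; rewrite mulr0 addr0.
Qed.

Lemma dir_derive (f : V -> R) (a w : V) (t : R) :
  derivable f (a + t *: w) w ->
  is_derive t 1 (fun s : R => f (a + s *: w)) (derive f (a + t *: w) w).
Proof.
move=> d.
have E : (fun h : R => h^-1 *: (((fun s : R => f (a + s *: w)) \o shift t) (h *: 1) - f (a + t *: w)))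
  = (fun h : R => h^-1 *: ((f \o shift (a + t *: w)) (h *: w) - f (a + t *: w))).
  apply: funext => h /=.
  congr (_ *: (f _ - _)).
  rewrite -[h *: 1]/(h * 1) mulr1 scalerDl.
  by rewrite addrCA.
split.
  by rewrite /derivable E; exact: d.
by rewrite /derive E.
Qed.

Lemma mvt0 (phi dphi : R -> R) :
  (forall t : R, is_derive t 1 phi (dphi t)) ->
  forall b, exists c, `|c| <= `|b| /\ phi b - phi 0 = dphi c * b.
Proof.
move=> D b.
have cont : forall a b : R, {within `[a, b], continuous phi}.
  move=> a0 b0; apply: derivable_within_continuous => x _.
  by have [] := D x.
case: (ltgtP 0 b) => hb.
- have [c cI E] := MVT hb (fun x _ => D x) (cont _ _).
  exists c; split; last by rewrite E subr0.
  move: cI; rewrite in_itv /= => /andP[c0 cb].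
  by rewrite !gtr0_norm // ltW.
- have [c cI E] := MVT hb (fun x _ => D x) (cont _ _).
  exists c; split.
    move: cI; rewrite in_itv /= => /andP[bc c0].
    by rewrite !ltr0_norm // lerN2 ltW.
  by apply/eqP; rewrite -(eqr_opp) opprB E sub0r mulrN.
- by exists 0; split; [rewrite normr0 normr_ge0| rewrite -hb subrr mulr0].
Qed.


Lemma first_order (f : V -> R)
  (Df : forall x (i : 'I_n), derivable f x (@ebasis R n i)) (p v : V) (eps : R)
  (Hq : forall (i : 'I_n) (w : V), (forall j, `|w 0 j| <= enorm v) ->
        `|partial f i (p + w) - partial f i p| <= eps) :
  `|f (p + v) - f p - dotv v (grad f p)| <= n%:R * (enorm v * eps).
Proof.
have tel : f (p + v) - f p = \sum_(i < n) (f (p + pre i.+1 v) - f (p + pre i v)).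
  rewrite -(big_mkord xpredT (fun k => f (p + pre k.+1 v) - f (p + pre k v))).
  by rewrite telescope_sumr // pren pre0 addr0.
have dE : dotv v (grad f p) = \sum_(i < n) v 0 i * partial f i p.
  by apply: eq_bigr => i _; rewrite mxE.
rewrite tel dE -sumrB.
apply: le_trans (ler_norm_sum _ _ _) _.
have -> : n%:R * (enorm v * eps) = \sum_(i < n) (enorm v * eps) by rewrite sumr_const card_ord mulr_natl.
apply: ler_sum => i _.
set a := p + pre i v.
have E1 : f (p + pre i.+1 v) = f (a + v 0 i *: @ebasis R n i) by rewrite preS addrA.
have E0 : f (p + pre i v) = f (a + 0 *: @ebasis R n i) by rewrite scale0r addr0.
rewrite E1 E0.
have [c [hc E]] := mvt0 (fun s => f (a + s *: ebasis R i)) (fun s => partial f i (a + s *: ebasis R i)) (fun t => @dir_derive f a _ t (Df _ i)) (v 0 i).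
rewrite E.
have Hw : `|partial f i (a + c *: ebasis R i) - partial f i p| <= eps.
  rewrite /a -addrA; apply: Hq => j; rewrite !mxE.
  case: (eqVneq j i) => [->|ji].
    by rewrite ltnn eqxx mulr1 add0r (le_trans hc) ?coord_le_enorm.
  rewrite mulr0 addr0; case: ifP => _.
    exact: coord_le_enorm.
  by rewrite normr0 enorm_ge0.
rewrite mulrC -mulrBr normrM.
apply: le_trans (ler_wpM2l (normr_ge0 _) Hw) _.
apply: ler_wpM2r; first exact: le_trans (normr_ge0 _) Hw.
exact: coord_le_enorm.
Qed.


Lemma cont_partial (f : V -> R) (A1 : smooth f) (i : 'I_n) : continuous (partial f i).
Proof. exact: (A1 [:: i]).1. Qed.

Lemma B_compact (f : V -> R) (A1 : smooth f)
  (A2 : exists M : R, 0 < M /\ forall x : V, ~ eball 0 M x -> 0 < f x) :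
  compact (zeroset f).
Proof.
have fc : continuous f by exact: (A1 [::]).1.
apply: bounded_closed_compact; last first.
  exact: ((continuous_closedP f).1 fc _ (@closed_eq R 0)).
have [M [M0 HM]] := A2.
exists M; split; first exact: num_real.
move=> M1 hM1 x Bx /=.
have hx : enorm x < M.
  apply: contrapT => hx; have := HM x; rewrite /eball /= subr0.
  by move=> /(_ hx); rewrite /zeroset /= in Bx; rewrite Bx ltxx.
apply: ltW; apply: le_lt_trans hM1; apply: ltW; apply: le_lt_trans hx.
have -> : `|x| = mx_norm x by []. rewrite mx_normrE; apply: bigmax_le; first exact: enorm_ge0.
by move=> [i j] _ /=; rewrite [i]ord1; exact: coord_le_enorm.
Qed.

Lemma grad_lb (f : V -> R) (A1 : smooth f)
  (Bc : compact (zeroset f))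
  (A3 : forall p : V, zeroset f p -> grad f p != 0) :
  exists c : R, 0 < c /\ forall p, zeroset f p -> exists i, c < `|partial f i p|.
Proof.
have H := (compact_near_coveringP _).1 Bc R (0%R^'+)
  (fun c p => exists i, c < `|partial f i p|) _.
have HH : \forall c \near 0%R^'+, zeroset f `<=` (fun p => exists i, c < `|partial f i p|).
  apply: H => p Bp.
  have [i hi] : exists i, partial f i p != 0.
    apply: contrapT => H0; move/negP: (A3 p Bp); apply; apply/eqP/rowP => i.
    rewrite !mxE; apply/eqP/negPn/negP => hi; apply: H0; exists i; exact: hi.
  have m0 : 0 < `|partial f i p| / 2 by rewrite divr_gt0 // normr_gt0.
  have Hc := cvgr_dist_lt _ _ (@cont_partial f A1 i p) _ m0.
  near=> x c; exists i.
  have h1 : `|partial f i p - partial f i x| < `|partial f i p| / 2 by near: x; exact: Hc.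
  have h2 : c < `|partial f i p| / 2 by near: c; exact: nbhs_right_lt.
  apply: (lt_le_trans h2).
  have := ler_normD (partial f i p - partial f i x) (partial f i x).
  rewrite subrK; lra.
have [c [c0 Hc]] := filter_ex (filterI (nbhs_right_gt 0) HH).
by exists c.
Unshelve. all: by end_near.
Qed.


Lemma unif_partial (f : V -> R) (A1 : smooth f)
  (Bc : compact (zeroset f)) (eps : R) : 0 < eps ->
  exists d : R, 0 < d /\ forall p, zeroset f p -> forall xi : V, ball p d xi ->
    forall i, `|partial f i xi - partial f i p| < eps.
Proof.
move=> e0.
have H := (compact_near_coveringP _).1 Bc R (0%R^'+)
  (fun d p => forall xi : V, ball p d xi ->
    forall i, `|partial f i xi - partial f i p| < eps) _.
have HH : \forall d \near 0%R^'+, zeroset f `<=` (fun p => forall xi : V, ball p d xi ->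
    forall i, `|partial f i xi - partial f i p| < eps).
  apply: H => p Bp.
  have e2 : 0 < eps / 2 by rewrite divr_gt0.
  have Hc : \forall x \near p, forall i, `|partial f i p - partial f i x| < eps / 2.
    apply: (@filter_forall _ _ (fun i x => `|partial f i p - partial f i x| < eps / 2) (nbhs p) _) => i.
    have := cvgr_dist_lt _ _ (@cont_partial f A1 i p) _ e2; apply; exact: nbhs_filter.
  have [eta eta0 Heta] := (nbhs_ballP _ _).1 Hc.
  have eta2 : 0 < eta / 2 by rewrite divr_gt0.
  near=> x d => xi hxi i.
  have hx : ball p (eta / 2) x by near: x; exact: nbhsx_ballx.
  have hd : d < eta / 2 by near: d; exact: nbhs_right_lt.
  have hxi' : ball p eta xi.
    rewrite [X in ball _ X _](splitr eta).
    apply: ball_triangle hx _.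
    exact: le_ball (ltW hd) _ hxi.
  have hx' : ball p eta x.
    by apply: le_ball hx; rewrite ler_pdivrMr // ler_pMr // ler1n.
  have := Heta _ hxi' i; have := Heta _ hx' i.
  have := ler_normD (partial f i xi - partial f i p) (partial f i p - partial f i x).
  rewrite addrA subrK [`|partial f i xi - partial f i p|]distrC => h1 h2 h3.
  lra.
have [d [d0 Hd]] := filter_ex (filterI (nbhs_right_gt 0) HH).
by exists d.
Unshelve. all: by end_near.
Qed.


Lemma ballE (p q : V) (e : R) : 0 < e -> (forall j, `|p 0 j - q 0 j| < e) -> ball p e q.
Proof. move=> e0 H; split => // i j; rewrite [i]ord1; exact: H. Qed.

End H.

Theorem lemma3 (R : realType) (n : nat) (f : 'rV[R]_n -> R)
  (A1 : smooth f)
  (A2 : exists M : R, 0 < M /\ forall x : 'rV[R]_n, ~ eball 0 M x -> 0 < f x)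
  (A3 : forall p : 'rV[R]_n, zeroset f p -> grad f p != 0) :
  forall beta : R, 0 < beta < 1 ->
  exists sigma2 : R, 0 < sigma2 /\
    forall (p : 'rV[R]_n) (r : R), zeroset f p -> 0 < r < sigma2 ->
      zeroset f `&` eball p r `<=` slab f beta r p.
Proof.
move=> beta /andP[b0 b1].
have Bc := @B_compact R n f A1 A2.
have [c [c0 Hc]] := @grad_lb R n f A1 Bc A3.
pose eps := beta * c / (n.+1)%:R.
have eps0 : 0 < eps by rewrite /eps divr_gt0 // ?mulr_gt0 // ltr0n.
have [d [d0 Hd]] := @unif_partial R n f A1 Bc eps eps0.
exists d; split => // p r Bp /andP[r0 rd] q [Bq hq].
pose v := q - p.
have pv : p + v = q by rewrite /v addrC subrK.
exists v; split; first by rewrite pv.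
have hv : enorm v < r := hq.
have FO := @first_order R n f (fun x i => (A1 [::]).2 i x) p v eps.
have := FO; rewrite pv; move: (Bq) (Bp); rewrite /zeroset /= => -> ->.
rewrite subr0 sub0r normrN => {}FO.
have {}FO := FO _.
have H1 : `|dotv v (grad f p)| <= n%:R * (enorm v * eps).
  apply: FO => i w hw; apply: ltW; apply: Hd => //.
  apply: ballE => // j; rewrite mxE opprD addrA subrr sub0r normrN.
  exact: le_lt_trans (hw j) (lt_trans hv rd).
have [i hi] := Hc p Bp.
have hg : c < enorm (grad f p).
  by apply: lt_le_trans hi _; have := @coord_le_enorm R n (grad f p) i; rewrite mxE.
have ne : 0 <= enorm v := @enorm_ge0 R n v.
have H2 : n%:R * (enorm v * eps) <= n%:R * (r * eps).
  by apply: ler_wpM2l => //; apply: ler_wpM2r; [exact: ltW | exact: ltW].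
have H3 : n%:R * (r * eps) < (n.+1)%:R * (r * eps).
  by rewrite ltr_pM2r ?mulr_gt0 // ltr_nat.
have H4 : (n.+1)%:R * (r * eps) = beta * c * r.
  rewrite /eps; field; by rewrite addrC natr1 pnatr_eq0.
have H5 : beta * c * r < beta * r * enorm (grad f p).
  by rewrite mulrAC ltr_pM2l ?mulr_gt0.
apply: le_lt_trans H1 _; apply: le_lt_trans H2 _; apply: lt_trans H3 _.
by rewrite H4.
Qed.
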